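(* Let $\alpha\in[0,1)$ and let $D$ be a digraph with $n\ge 2$ vertices, outdegrees $d_1^+,\dots,d_n^+$, and $a$ arcs, where $a\ge n\beta$ with $\beta=\max(1-\alpha,\ \alpha\, d^+_{\max})$ and $d^+_{\max}=\max_i d_i^+$. Then $$\|D_\alpha\|_*\le \frac an+\sqrt{(n-1)\Big[(1-\alpha)^2a+\alpha^2\sum_{i=1}^n (d_i^+)^2-\frac{a^2}{n^2}\Big]},$$ with equality if and only if $D$ satisfies one of the following: (a) $\alpha=0$ and $D$ is a direct sum (vertex-disjoint union) of directed cycles; (b) $D$ is $\frac an$-regular and $A_\alpha(D)$ has exactly two distinct (nonnegative) singular values, namely $\sigma_{1\alpha}=\frac an$ and $\sigma_{2\alpha}=\sigma_{3\alpha}=\dots=\sigma_{n\alpha}=\sigma$, where $$\sigma=\sqrt{\frac{\alpha^2\sum_{i=1}^n (d_i^+)^2+(1-\alpha)^2a-\frac{a^2}{n^2}}{n-1}}.$$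
   Context: Digraphs are simple: a finite vertex set and a set of arcs, which are ordered pairs of distinct vertices, with no parallel arcs (a pair of opposite arcs is allowed). A directed cycle of order $m\ge2$ has vertices $w_1,\dots,w_m$ and arcs $(w_1,w_2),\dots,(w_{m-1},w_m),(w_m,w_1)$. A digraph is $k$-regular if every vertex has outdegree $k$ and indegree $k$. For a digraph $D$ on vertices $v_1,\dots,v_n$, the adjacency matrix $A(D)=(a_{ij})$ has $a_{ij}=1$ if $(v_i,v_j)$ is an arc and $0$ otherwise; $d_i^+$ is the outdegree of $v_i$, and $\Delta^+(D)=\mathrm{diag}(d_1^+,\dots,d_n^+)$. For $\alpha\in[0,1)$, $A_\alpha(D)=\alpha\Delta^+(D)+(1-\alpha)A(D)$. Its singular values $\sigma_{1\alpha}\ge\sigma_{2\alpha}\ge\dots\ge\sigma_{n\alpha}\ge0$ are the nonnegative square roots of the eigenvalues of $A_\alpha(D)A_\alpha(D)^T$, and $\|D_\alpha\|_*=\sum_{i=1}^n\sigma_{i\alpha}$. *)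

(* Defs.v *)
From mathcomp Require Import all_boot all_order all_algebra.
From mathcomp Require Import reals.
Set Implicit Arguments. Unset Strict Implicit. Unset Printing Implicit Defensive.
Import Order.TTheory GRing.Theory Num.Theory.
Local Open Scope ring_scope.

(* A simple digraph on vertex set 'I_n: an arc relation D with no loops
   (no parallel arcs is automatic for a relation). *)
Definition loopless (n : nat) (D : rel 'I_n) : Prop := forall i, ~~ D i i.

Definition outdeg (n : nat) (D : rel 'I_n) (i : 'I_n) : nat := #|[set j | D i j]|.
Definition indeg (n : nat) (D : rel 'I_n) (j : 'I_n) : nat := #|[set i | D i j]|.

Definition narcs (n : nat) (D : rel 'I_n) : nat :=
  #|[set p : 'I_n * 'I_n | D p.1 p.2]|.

Definition maxoutdeg (n : nat) (D : rel 'I_n) : nat := \max_(i < n) outdeg D i.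

Definition adjmx (R : realType) (n : nat) (D : rel 'I_n) : 'M[R]_n :=
  \matrix_(i, j) (D i j)%:R.

Definition Aalpha (R : realType) (alpha : R) (n : nat) (D : rel 'I_n) : 'M[R]_n :=
  alpha *: diag_mx (\row_i ((outdeg D i)%:R : R)) + (1 - alpha) *: adjmx R D.

(* sigma lists the singular values of M in nonincreasing order, counted with
   multiplicity: they are nonnegative and their squares are exactly the
   eigenvalues (roots of the characteristic polynomial, with multiplicity)
   of M M^T. *)
Definition singular_values (R : realType) (n : nat) (M : 'M[R]_n)
  (sigma : 'I_n -> R) : Prop :=
  [/\ forall i, 0 <= sigma i,
      forall i j : 'I_n, (i <= j)%N -> sigma j <= sigma i
    & char_poly (M *m M^T) = \prod_(i < n) ('X - (sigma i ^+ 2)%:P)].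

(* D is a direct sum (vertex-disjoint union covering all vertices) of directed
   cycles: a family cs of cycles, each a duplicate-free vertex sequence of order
   >= 2, partitioning the vertex set, whose arcs are exactly the arcs of D
   (arc (x, next c x) for x in the cycle c). *)
Definition direct_sum_of_cycles (n : nat) (D : rel 'I_n) : Prop :=
  exists cs : seq (seq 'I_n),
    [/\ all (fun c => (2 <= size c)%N) cs,
        perm_eq (flatten cs) (enum 'I_n)
      & forall i j, D i j = has (fun c => (i \in c) && (next c i == j)) cs].

(* Main.v *)
Require Import Defs.
From mathcomp Require Import all_boot all_order all_algebra.
From mathcomp Require Import reals.
From mathcomp Require Import ring lra.
From mathcomp Require complex.
Import Order.TTheory GRing.Theory Num.Theory.
Local Open Scope ring_scope.
Set Implicit Arguments. Unset Strict Implicit. Unset Printing Implicit Defensive.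

Section Psd.
Variable R : realFieldType.

Lemma qf_expand n (C : 'M[R]_n) (u y : 'rV_n) (r : R) :
  ((u + r *: y) *m C *m (u + r *: y)^T) 0 0 =
  (u *m C *m u^T) 0 0 + r * (u *m C *m y^T) 0 0 + r * (y *m C *m u^T) 0 0
  + r ^+ 2 * (y *m C *m y^T) 0 0.
Proof.
have EA (A B : 'M[R]_1) : (A + B) 0 0 = A 0 0 + B 0 0 by rewrite mxE.
have EZ (a : R) (A : 'M[R]_1) : (a *: A) 0 0 = a * A 0 0 by rewrite mxE.
rewrite linearD linearZ /= mulmxDl mulmxDr !mulmxDl -!scalemxAl -!scalemxAr.
rewrite !EA !EZ; ring.
Qed.

Lemma qf_sym n (C : 'M[R]_n) (u y : 'rV_n) : C^T = C ->
  (y *m C *m u^T) 0 0 = (u *m C *m y^T) 0 0.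
Proof.
move=> Cs; have -> : (y *m C *m u^T) 0 0 = (y *m C *m u^T)^T 0 0 by rewrite [in RHS]mxE.
by rewrite !trmx_mul trmxK Cs mulmxA.
Qed.

Lemma psd_null n (C : 'M[R]_n) (u : 'rV_n) : C^T = C ->
  (forall v : 'rV_n, 0 <= (v *m C *m v^T) 0 0) ->
  (u *m C *m u^T) 0 0 = 0 -> u *m C = 0.
Proof.
move=> Cs psd u0.
set y := u *m C.
set N : R := (y *m y^T) 0 0.
have N0 : 0 <= N by rewrite /N mxE; apply: sumr_ge0 => j _; rewrite [y^T _ _]mxE -expr2 sqr_ge0.
have hb : (u *m C *m y^T) 0 0 = N by [].
have hb2 : (y *m C *m u^T) 0 0 = N by rewrite qf_sym.
set q : R := (y *m C *m y^T) 0 0.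
have q0 : 0 <= q by apply: psd.
have NE : N = (y *m y^T) 0 0 by [].
have q1 : 0 < q + 1 by rewrite ltr_wpDl.
have := psd (u + (- N / (q + 1)) *: y); rewrite qf_expand u0 hb hb2 -/q.
have -> : 0 + - N / (q + 1) * N + - N / (q + 1) * N + (- N / (q + 1)) ^+ 2 * q
   = - (N ^+ 2 * (q + 2)) / (q + 1) ^+ 2.
  by field; rewrite gt_eqF.
rewrite pmulr_lge0 ?invr_gt0 ?exprn_gt0 //.
move=> h; clearbody y N q.
have NN : N = 0 by nra.
apply/rowP => j; rewrite mxE.
have : (y *m y^T) 0 0 = 0 by rewrite -NE.
rewrite mxE => /eqP; rewrite psumr_eq0; last by move=> i _; rewrite [y^T _ _]mxE -expr2 sqr_ge0.
move=> /allP /(_ j (mem_index_enum _)) /=; rewrite mxE.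
by rewrite mulf_eq0 orbb => /eqP.
Qed.
End Psd.


Section RealLemmas.
Variable R : rcfType.

Lemma sum_sq_dev (I : finType) (P : pred I) (x : I -> R) (mu : R) :
  \sum_(i | P i) (x i - mu) ^+ 2 =
  \sum_(i | P i) x i ^+ 2 - 2 * mu * \sum_(i | P i) x i + #|P|%:R * mu ^+ 2.
Proof.
under eq_bigr => i _ do rewrite sqrrB.
rewrite big_split /= sumrB /= sumr_const.
have -> : \sum_(i | P i) x i * mu *+ 2 = 2 * mu * \sum_(i | P i) x i.
  by rewrite mulr_sumr; apply: eq_bigr => i _; rewrite -mulr_natr; ring.
by rewrite (mulr_natl (mu ^+ 2) #|P|).
Qed.

Lemma cauchy_sum (I : finType) (P : pred I) (x : I -> R) :
  (\sum_(i | P i) x i) ^+ 2 <= #|P|%:R * \sum_(i | P i) x i ^+ 2.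
Proof.
have [N0|Npos] := eqVneq #|P| 0%N.
  have P0 : P =1 xpred0.
    move=> i; apply/negP => Pi; have : (0 < #|P|)%N by apply/card_gt0P; exists i.
    by rewrite N0.
  by rewrite !big_pred0 // expr0n /= mulr0.
set N := #|P|%:R; set S := \sum_(i | P i) x i; set Q := \sum_(i | P i) x i ^+ 2.
have Ngt0 : 0 < N by rewrite ltr0n lt0n.
have h := sum_sq_dev P x (S / N).
have h0 : 0 <= \sum_(i | P i) (x i - S / N) ^+ 2 by apply: sumr_ge0 => i _; apply: sqr_ge0.
rewrite h -/S -/Q -/N in h0.
have e : Q - 2 * (S / N) * S + N * (S / N) ^+ 2 = (N * Q - S ^+ 2) / N.
  by field; rewrite gt_eqF.
rewrite e in h0; rewrite -subr_ge0.
by move: h0; rewrite pmulr_lge0 // invr_gt0.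
Qed.

Lemma cauchy_sum_eq (I : finType) (P : pred I) (x : I -> R) :
  (\sum_(i | P i) x i) ^+ 2 = #|P|%:R * \sum_(i | P i) x i ^+ 2 ->
  forall i, P i -> x i = (\sum_(i | P i) x i) / #|P|%:R.
Proof.
move=> heq i Pi.
have Npos : (0 < #|P|)%N by apply/card_gt0P; exists i.
set N := #|P|%:R in heq *; set S := \sum_(i | P i) x i in heq *.
set Q := \sum_(i | P i) x i ^+ 2 in heq.
have Ngt0 : 0 < N by rewrite ltr0n.
have h := sum_sq_dev P x (S / N); rewrite -/S -/Q -/N in h.
have e : Q - 2 * (S / N) * S + N * (S / N) ^+ 2 = (N * Q - S ^+ 2) / N.
  by field; rewrite gt_eqF.
rewrite e heq subrr mul0r in h.
have /psumr_eq0P H : \sum_(i | P i) (x i - S / N) ^+ 2 = 0 by [].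
have := H (fun j _ => sqr_ge0 _) i Pi.
by move/eqP; rewrite sqrf_eq0 subr_eq0 => /eqP.
Qed.

Lemma sq_le (a b : R) : 0 <= a -> 0 <= b -> a ^+ 2 <= b ^+ 2 -> a <= b.
Proof. by move=> a0 b0; rewrite ler_sqr. Qed.

Lemma main_ineq (m x k F S : R) : 1 <= m -> 0 <= k -> k <= x -> x ^+ 2 <= F ->
  F <= (m + 1) * k ^+ 2 -> 0 <= S -> S ^+ 2 <= m * (F - x ^+ 2) ->
  x + S <= k + Num.sqrt (m * (F - k ^+ 2)) /\ (x + S = k + Num.sqrt (m * (F - k ^+ 2)) -> x = k /\ S ^+ 2 = m * (F - x ^+ 2)).
Proof.
move=> m1 k0 kx xF Fk S0 SQ2.
have xk2 : k ^+ 2 <= x ^+ 2 by rewrite lerXn2r // ?nnegrE //; apply: le_trans kx.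
have hQ0 : 0 <= m * (F - x ^+ 2) by apply: mulr_ge0; lra.
have hP0 : 0 <= m * (F - k ^+ 2) by apply: mulr_ge0; lra.
set P := Num.sqrt (m * (F - k ^+ 2)); set Q := Num.sqrt (m * (F - x ^+ 2)).
have P2 : P ^+ 2 = m * (F - k ^+ 2) by rewrite sqr_sqrtr.
have Q2 : Q ^+ 2 = m * (F - x ^+ 2) by rewrite sqr_sqrtr.
have P0 : 0 <= P by apply: sqrtr_ge0.
have Q0 : 0 <= Q by apply: sqrtr_ge0.
have SQ : S <= Q by apply: sq_le => //; rewrite Q2.
have PM : P <= m * k.
  apply: sq_le => //; first nra.
  rewrite P2; nra.
have QP : Q <= P by apply: sq_le => //; rewrite P2 Q2; nra.
have id : (P + Q) * (P - Q - (x - k)) = (x - k) * (m * (x + k) - P - Q).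
  have -> : (P + Q) * (P - Q - (x - k)) = P ^+ 2 - Q ^+ 2 - (x - k) * (P + Q) by ring.
  rewrite P2 Q2; ring.
have G : forall (h : k < x), k + P - (x + Q) > 0.
  move=> h; have : (P + Q) * (P - Q - (x - k)) > 0.
    rewrite id; apply: mulr_gt0; nra.
  nra.
have G0 : x + Q <= k + P.
  move: kx; rewrite le_eqVlt => /orP [/eqP ekx|h]; last by have := G h; lra.
  by rewrite /Q -ekx.
split; first lra.
move=> heq; have ekx : x = k.
  move: kx; rewrite le_eqVlt => /orP [/eqP -> //|h].
  have := G h; lra.
split=> //; rewrite -Q2; suff -> : S = Q by [].
rewrite /Q ekx -/P; lra.
Qed.
End RealLemmas.


Lemma uniq_flatten_props (T : eqType) (cs : seq (seq T)) : uniq (flatten cs) ->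
  (forall c, c \in cs -> uniq c) /\
  (forall c1 c2 x, c1 \in cs -> c2 \in cs -> x \in c1 -> x \in c2 -> c1 = c2).
Proof.
elim: cs => [|c cs IH] /=; first by split.
rewrite cat_uniq => /and3P [uc hn ufl]; have [IH1 IH2] := IH ufl.
split.
  by move=> c'; rewrite inE => /orP [/eqP ->|]; [| apply: IH1].
move=> c1 c2 x; rewrite !inE => /orP [/eqP->|h1] /orP [/eqP->|h2] x1 x2 //.
- have xf : x \in flatten cs by apply/flattenP; exists c2.
  by move/hasPn: hn => /(_ x xf); rewrite /= x1.
- have xf : x \in flatten cs by apply/flattenP; exists c1.
  by move/hasPn: hn => /(_ x xf); rewrite /= x2.
- exact: IH2 h1 h2 x1 x2.
Qed.

Lemma prev_next_inj (T : eqType) (c : seq T) : uniq c -> injective (next c).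
Proof. by move=> uc; apply: (can_inj (prev_next uc)). Qed.


Lemma uniq_flatten_disj (T : eqType) (cs : seq (seq T)) :
  uniq cs -> all uniq cs ->
  (forall c1 c2 x, c1 \in cs -> c2 \in cs -> x \in c1 -> x \in c2 -> c1 = c2) ->
  uniq (flatten cs).
Proof.
elim: cs => [//|c cs IH] /= /andP[cncs ucs] /andP[uc acs] H.
rewrite cat_uniq uc IH //=; last first.
  by move=> c1 c2 x h1 h2; apply: H; rewrite inE ?h1 ?h2 orbT.
rewrite andbT; apply/hasPn => x /flattenP [c' c'in xc']; apply/negP => xc.
have ec : c = c' by apply: (H c c' x); rewrite ?inE ?eqxx ?c'in ?orbT.
by move: cncs; rewrite ec c'in.
Qed.

Lemma cycles_of_perm (T : finType) (f : T -> T) :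
  injective f -> (forall x, f x != x) ->
  exists cs : seq (seq T),
    [/\ all (fun c => (2 <= size c)%N) cs, perm_eq (flatten cs) (enum T)
      & forall i j, (f i == j) = has (fun c => (i \in c) && (next c i == j)) cs].
Proof.
move=> finj fnfix.
have csym : connect_sym (frel f) by move=> x y; apply: fconnect_sym.
pose cs := undup [seq orbit f (froot f x) | x <- enum T].
have incs c : c \in cs -> exists x, c = orbit f (froot f x).
  by rewrite mem_undup => /mapP [x _ ->]; exists x.
have inorb x : x \in orbit f (froot f x).
  by rewrite -fconnect_orbit csym connect_root.
have orbcs x : orbit f (froot f x) \in cs.
  by rewrite mem_undup; apply/mapP; exists x; rewrite ?mem_enum.
have same c1 c2 x : c1 \in cs -> c2 \in cs -> x \in c1 -> x \in c2 -> c1 = c2.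
  move=> /incs [y1 ->] /incs [y2 ->]; rewrite -!fconnect_orbit => h1 h2.
  suff -> : froot f y1 = froot f y2 by [].
  have e1 := (fingraph.rootP csym h1).
  have e2 := (fingraph.rootP csym h2).
  by rewrite -[froot f y1](fingraph.root_root csym) e1 -e2 (fingraph.root_root csym).
exists cs; split.
- apply/allP => c /incs [y ->]; rewrite size_orbit.
  set r := froot f y.
  have := order_gt0 f r; rewrite leq_eqVlt => /orP [/eqP o1|//].
  have := cycle_orbit finj r; rewrite /orbit -o1 /= andbT => /eqP h.
  by have := fnfix r; rewrite h eqxx.
- apply: uniq_perm; first apply: uniq_flatten_disj.
  + exact: undup_uniq.
  + by apply/allP => c /incs [y ->]; apply: orbit_uniq.
  + exact: same.
  + exact: enum_uniq.
  move=> x; rewrite mem_enum; apply/flattenP; exists (orbit f (froot f x)) => //.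
- move=> i j; apply/eqP/hasP => [<-|[c cin /andP [ic /eqP <-]]].
    exists (orbit f (froot f i)) => //; rewrite inorb /=.
    by rewrite (nextE (cycle_orbit finj _)) ?inorb.
  have [y ey] := incs c cin; rewrite ey in ic *.
  by rewrite (nextE (cycle_orbit finj _)).
Qed.


Lemma dsc_fun n (D : rel 'I_n) : direct_sum_of_cycles D ->
  exists f : 'I_n -> 'I_n, injective f /\ forall i j, D i j = (f i == j).
Proof.
move=> [cs [_ pe HD]].
have ufl : uniq (flatten cs) by rewrite (perm_uniq pe) enum_uniq.
have [uall same] := uniq_flatten_props ufl.
have hasx x : has (fun c => x \in c) cs.
  have : x \in flatten cs by rewrite (perm_mem pe) mem_enum.
  by move/flattenP => [c cin xc]; apply/hasP; exists c.
pose cof x := nth [::] cs (find (fun c => x \in c) cs).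
have cofin x : cof x \in cs by apply: mem_nth; rewrite -has_find.
have xcof x : x \in cof x by apply: (nth_find [::] (hasx x)).
exists (fun x => next (cof x) x); split.
  move=> i i' /= e.
  have e2 : cof i = cof i'.
    apply: (same _ _ (next (cof i) i)) => //; first by rewrite mem_next.
    by rewrite e mem_next.
  by rewrite e2 in e; apply: (prev_next_inj (uall _ (cofin i'))) e.
move=> i j; rewrite HD; apply/hasP/eqP => [[c cin /andP [ic /eqP <-]]|<-].
  by rewrite (same _ _ _ cin (cofin i) ic (xcof i)).
by exists (cof i); rewrite ?xcof ?eqxx.
Qed.


Lemma card_sum (R : realType) (T : finType) (P : pred T) :
  (#|[set x | P x]|%:R : R) = \sum_x (P x)%:R.
Proof.
rewrite -sum1dep_card natr_sum big_mkcond /=; apply: eq_bigr => x _.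
by case: (P x).
Qed.

Section Mat.
Variables (R : realType) (alpha : R) (n : nat) (D : rel 'I_n).
Local Notation M := (Aalpha alpha D).
Local Notation dR i := ((outdeg D i)%:R : R).
Local Notation eR i := ((indeg D i)%:R : R).

Lemma outdegE i : dR i = \sum_j (D i j)%:R.
Proof. by rewrite /outdeg card_sum. Qed.

Lemma indegE j : eR j = \sum_i (D i j)%:R.
Proof. by rewrite /indeg card_sum. Qed.

Lemma narcs_out : ((narcs D)%:R : R) = \sum_i dR i.
Proof.
rewrite /narcs card_sum -(pair_bigA _ (fun i j => ((D i j)%:R : R))) /=.
by apply: eq_bigr => i _; rewrite outdegE.
Qed.

Lemma narcs_in : ((narcs D)%:R : R) = \sum_j eR j.
Proof.
rewrite narcs_out; under eq_bigr => i _ do rewrite outdegE.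
by rewrite exchange_big; apply: eq_bigr => j _; rewrite indegE.
Qed.

Lemma Mentry i j : M i j = alpha * dR i * (i == j)%:R + (1 - alpha) * (D i j)%:R.
Proof. by rewrite /Aalpha /adjmx !mxE -mulrA mulr_natr. Qed.

Lemma row_sum i : \sum_j M i j = dR i.
Proof.
under eq_bigr => j _ do rewrite Mentry.
rewrite big_split /= -!mulr_sumr -outdegE.
rewrite (bigD1 i) //= eqxx big1 ?addr0; last by move=> j /negbTE; rewrite eq_sym => ->; rewrite ?mulr0n ?mulr0.
rewrite mulr1; ring.
Qed.

Lemma col_sum j : \sum_i M i j = alpha * dR j + (1 - alpha) * eR j.
Proof.
under eq_bigr => i _ do rewrite Mentry.
rewrite big_split /= -!mulr_sumr -indegE.
rewrite (bigD1 j) //= eqxx big1 ?addr0; last by move=> i /negbTE => ->; rewrite ?mulr0n ?mulr0.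
by rewrite mulr1.
Qed.

Lemma diagB i : loopless D ->
  (M *m M^T) i i = alpha ^+ 2 * dR i ^+ 2 + (1 - alpha) ^+ 2 * dR i.
Proof.
move=> hl; rewrite mxE.
have e : forall j, M i j * M^T j i = alpha ^+ 2 * dR i ^+ 2 * (i == j)%:R + (1 - alpha) ^+ 2 * (D i j)%:R.
  move=> j; rewrite [M^T j i]mxE Mentry.
  case: eqVneq => [<-|ne]; first by rewrite (negbTE (hl i)) /=; ring.
  by case: (D i j) => /=; ring.
under eq_bigr => j _ do rewrite e.
rewrite big_split /= -!mulr_sumr -outdegE.
rewrite (bigD1 i) //= eqxx big1 ?addr0; last by move=> j /negbTE; rewrite eq_sym => ->; rewrite ?mulr0n ?mulr0.
by rewrite mulr1.
Qed.

Lemma traceB : loopless D ->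
  \tr (M *m M^T) = alpha ^+ 2 * \sum_i dR i ^+ 2 + (1 - alpha) ^+ 2 * (narcs D)%:R.
Proof.
move=> hl; rewrite /mxtrace; under eq_bigr => i _ do rewrite diagB //.
by rewrite big_split /= -!mulr_sumr narcs_out.
Qed.

Definition u1 : 'rV[R]_n := const_mx 1.

Lemma u1M j : (u1 *m M) 0 j = alpha * dR j + (1 - alpha) * eR j.
Proof.
rewrite mxE -col_sum; apply: eq_bigr => i _; by rewrite [u1 _ _]mxE mul1r.
Qed.

Lemma u1B : (u1 *m (M *m M^T) *m u1^T) 0 0 = \sum_j (alpha * dR j + (1 - alpha) * eR j) ^+ 2.
Proof.
rewrite !mulmxA -mulmxA -trmx_mul mxE; apply: eq_bigr => j _.
rewrite [(_)^T _ _]mxE -expr2; congr (_ ^+ 2); apply: u1M.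
Qed.

Lemma u1u1 : (u1 *m u1^T) 0 0 = n%:R.
Proof.
rewrite mxE (eq_bigr (fun _ => 1)); last by move=> j _; rewrite !mxE mulr1.
by rewrite sumr_const card_ord.
Qed.

Lemma u1B_row (c : R) : (forall j, alpha * dR j + (1 - alpha) * eR j = c) ->
  forall i, (u1 *m (M *m M^T)) 0 i = c * dR i.
Proof.
move=> hc i; rewrite mulmxA mxE -row_sum mulr_sumr; apply: eq_bigr => j _.
by rewrite u1M hc [M^T _ _]mxE.
Qed.

End Mat.


Section Misc.
Variable R : realFieldType.

Lemma qf_shift n (B : 'M[R]_n) (a : R) (v : 'rV_n) :
  (v *m (a%:M - B) *m v^T) 0 0 = a * (v *m v^T) 0 0 - (v *m B *m v^T) 0 0.
Proof.
rewrite mulmxBr mulmxBl mul_mx_scalar -scalemxAl.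
have EB (X Y : 'M[R]_1) : (X - Y) 0 0 = X 0 0 - Y 0 0 by rewrite !mxE.
have EZ (c : R) (A : 'M[R]_1) : (c *: A) 0 0 = c * A 0 0 by rewrite mxE.
by rewrite EB EZ.
Qed.

Lemma qf_delta n (C : 'M[R]_n) (i : 'I_n) :
  ((delta_mx 0 i : 'rV[R]_n) *m C *m (delta_mx 0 i : 'rV[R]_n)^T) 0 0 = C i i.
Proof.
by rewrite -rowE trmx_delta -colE [col _ _ _ _]mxE [row _ _ _ _]mxE.
Qed.

Lemma trace_char n (B : 'M[R]_n) (lam : 'I_n -> R) : (0 < n)%N ->
  char_poly B = \prod_(i < n) ('X - (lam i)%:P) -> \sum_i lam i = \tr B.
Proof.
move=> n0 hB; have := char_poly_trace B n0; rewrite hB.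
rewrite -(big_map lam xpredT (fun x => 'X - x%:P)).
have sz : size (map lam (index_enum 'I_n)) = n by rewrite size_map -[index_enum _]enumT -cardT card_ord.
have e : n.-1 = (size (map lam (index_enum 'I_n))).-1 by rewrite sz.
rewrite [in X in X -> _]e coefPn_prod_XsubC ?sz -?lt0n // big_map => /eqP; rewrite eqr_opp => /eqP.
done.
Qed.

Lemma root_char n (B : 'M[R]_n) (lam : 'I_n -> R) x :
  char_poly B = \prod_(i < n) ('X - (lam i)%:P) -> root (char_poly B) x ->
  exists i, x = lam i.
Proof.
move=> hB; rewrite hB -(big_map lam xpredT (fun x => 'X - x%:P)) root_prod_XsubC.
by move=> /mapP [i _ ->]; exists i.
Qed.

Lemma root_char_lam n (B : 'M[R]_n) (lam : 'I_n -> R) i :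
  char_poly B = \prod_(i < n) ('X - (lam i)%:P) -> root (char_poly B) (lam i).
Proof.
move=> hB; rewrite hB -(big_map lam xpredT (fun x => 'X - x%:P)) root_prod_XsubC.
by apply/mapP; exists i; rewrite ?mem_index_enum.
Qed.

Lemma char_poly1 n : char_poly (1%:M : 'M[R]_n) = \prod_(i < n) ('X - 1%:P).
Proof.
rewrite char_poly_trig ?scalar_mx_is_trig //; apply: eq_bigr => i _.
by rewrite mxE eqxx.
Qed.
End Misc.

Lemma deg1_fun n (D : rel 'I_n) : (forall i, outdeg D i = 1%N) -> (forall j, indeg D j = 1%N) ->
  exists f : 'I_n -> 'I_n, injective f /\ forall i j, D i j = (f i == j).
Proof.
move=> ho hi.
have hf : forall i, exists j, [set j | D i j] = [set j].
  by move=> i; apply/cards1P; rewrite -(ho i).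
have hg : forall j, exists i, [set i | D i j] = [set i].
  by move=> j; apply/cards1P; rewrite -(hi j).
pose f i := odflt i [pick j | D i j].
have fE : forall i j, D i j = (f i == j).
  move=> i j; have [j0 e] := hf i.
  have Dij x : D i x = (x == j0) by have := congr1 (fun S : {set 'I_n} => x \in S) e; rewrite !inE.
  rewrite /f; case: pickP => [x|]; last by move=> /(_ j0); rewrite Dij eqxx.
  by rewrite !Dij => /eqP -> /=; rewrite eq_sym.
exists f; split => // i i' e.
have [x ex] := hg (f i).
have Dx y : D y (f i) = (y == x) by have := congr1 (fun S : {set 'I_n} => y \in S) ex; rewrite !inE.
have := Dx i; rewrite fE eqxx => /esym/eqP ->.
by have := Dx i'; rewrite fE e eqxx => /esym/eqP ->.
Qed.

Module RayM.
Import complex.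
Import Num.Def.
Local Open Scope sesquilinear_scope.

Section Ray.
Variable R : rcfType.
Local Notation C := (R[i]).
Local Notation f := (real_complex R).

Lemma conj_rc (x : R) : (f x)^* = f x.
Proof. by apply/CrealP/complex_realP; exists x. Qed.

Lemma map_conj_rc m p (A : 'M[R]_(m,p)) : (map_mx f A) ^ conjC = map_mx f A.
Proof. by apply/matrixP => i j; rewrite !mxE conj_rc. Qed.

Lemma trC_rc m p (A : 'M[R]_(m,p)) : (map_mx f A)^t* = map_mx f A^T.
Proof. by apply/matrixP => i j; rewrite !mxE conj_rc. Qed.

Lemma rayleigh n (B : 'M[R]_n) (lam : 'I_n -> R) (t : R) :
  B^T = B -> char_poly B = \prod_(i < n) ('X - (lam i)%:P) -> (forall i, lam i <= t) ->
  forall v : 'rV[R]_n, (v *m B *m v^T) 0 0 <= t * (v *m v^T) 0 0.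
Proof.
move=> Bsym Bchar lamt v.
set BC := map_mx f B.
have herm : BC ^t* = BC by rewrite /BC map_trmx map_conj_rc Bsym.
have Bnormal : BC \is normalmx by rewrite qualifE herm.
have := orthomx_spectralP Bnormal.
set P := spectralmx BC; set d := spectral_diag BC => BCE.
have Pu : P \is unitarymx by apply: spectral_unitarymx.
have PiE : invmx P = P^t* by apply: invmx_unitary.
have PPt : P *m P^t* = 1%:M by apply/unitarymxP.
have PtP : P^t* *m P = 1%:M by rewrite -PiE mulVmx // unitarymx_unit.
have droot : forall i, exists j, d 0 i = f (lam j).
  move=> i.
  have : eigenvalue BC (d 0 i).
    apply/eigenvalueP; exists (row i P).
      rewrite -row_mul {1}BCE PiE !mulmxA PPt mul1mx mul_diag_mx.
      by apply/rowP => j; rewrite !mxE.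
    apply/eqP => Pi0.
    have := congr1 (fun M => M *m P^t*) Pi0.
    rewrite /= -row_mul PPt mul0mx => /rowP /(_ i); rewrite !mxE eqxx /= => /eqP.
    by rewrite oner_eq0.
  rewrite eigenvalue_root_char /BC -map_char_poly Bchar rmorph_prod /=.
  under eq_bigr => j _ do rewrite map_polyXsubC.
  rewrite -(big_map (fun j => f (lam j)) xpredT (fun x => 'X - x%:P)).
  by rewrite root_prod_XsubC => /mapP [j _ ->]; exists j.
have key : forall (X : 'M[R]_n), map_mx f (v *m X *m v^T) = map_mx f v *m map_mx f X *m (map_mx f v)^t*.
  by move=> X; rewrite !map_mxM trC_rc.
set w := map_mx f v *m P^t*.
have wE : P *m (map_mx f v)^t* = w^t*.
  by rewrite /w trmx_mul map_mxM trmxCK.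
have e1 : f ((v *m B *m v^T) 0 0) = \sum_j w 0 j * d 0 j * (w 0 j)^*.
  have := congr1 (fun M : 'M[C]_1 => M 0 0) (key B); rewrite mxE /= => ->.
  rewrite -/BC {1}BCE PiE -!mulmxA wE !mulmxA -/w.
  rewrite mxE; apply: eq_bigr => j _.
  by rewrite mul_mx_diag !mxE.
have e2 : f ((v *m v^T) 0 0) = \sum_j w 0 j * (w 0 j)^*.
  have := congr1 (fun M : 'M[C]_1 => M 0 0) (key 1%:M); rewrite map_mx1 mulmx1 mulmx1 mxE /= => ->.
  rewrite -{1}[map_mx f v]mulmx1 -PtP !mulmxA -/w -mulmxA wE mxE; apply: eq_bigr => j _.
  by rewrite !mxE.
rewrite -lecR rmorphM /= e1 e2 mulr_sumr; apply: ler_sum => j _.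
rewrite mulrAC [f t * _]mulrC; apply: ler_wpM2l; first exact: mul_conjC_ge0.
have [k ->] := droot j.
by rewrite lecR.
Qed.
End Ray.

End RayM.

Unset Implicit Arguments. Set Strict Implicit. Set Printing Implicit Defensive.

Theorem theorem3p3 (R : realType) (alpha : R) (n : nat) (D : rel 'I_n)
  (sigma : 'I_n -> R) :
  0 <= alpha -> alpha < 1 -> (2 <= n)%N -> loopless D ->
  singular_values (Aalpha alpha D) sigma ->
  let a : R := (narcs D)%:R in
  let nR : R := n%:R in
  let sumsq : R := \sum_(i < n) ((outdeg D i)%:R) ^+ 2 in
  let beta : R := Num.max (1 - alpha) (alpha * (maxoutdeg D)%:R) in
  nR * beta <= a ->
  let bound : R := a / nR + Num.sqrt ((nR - 1) *
      ((1 - alpha) ^+ 2 * a + alpha ^+ 2 * sumsq - a ^+ 2 / nR ^+ 2)) in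
  let s : R := Num.sqrt ((alpha ^+ 2 * sumsq + (1 - alpha) ^+ 2 * a
                          - a ^+ 2 / nR ^+ 2) / (nR - 1)) in
  \sum_(i < n) sigma i <= bound /\
  (\sum_(i < n) sigma i = bound <->
     (alpha = 0 /\ direct_sum_of_cycles D) \/
     ((forall i, (outdeg D i)%:R = a / nR /\ (indeg D i)%:R = a / nR) /\
      s != a / nR /\
      (forall i : 'I_n, val i = 0%N -> sigma i = a / nR) /\
      (forall i : 'I_n, val i <> 0%N -> sigma i = s))).
Proof.
move=> ha0 ha1 hn hloop [hsig0 hsigdec hchar] a nR sumsq beta hbeta bound s.
set M := Aalpha alpha D.
set B := M *m M^T.
have n0 : (0 < n)%N by apply: leq_trans hn.
pose i0 : 'I_n := Ordinal n0.
pose lam i := sigma i ^+ 2.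
have hcharl : char_poly B = \prod_(i < n) ('X - (lam i)%:P) by [].
have Bsym : B^T = B by rewrite /B trmx_mul trmxK.
have lammax : forall i, lam i <= lam i0.
  move=> i; rewrite /lam ler_sqr ?nnegrE //; apply: hsigdec; by [].
have nR2 : 2 <= nR by rewrite /nR (ler_nat R 2 n).
set F := (1 - alpha) ^+ 2 * a + alpha ^+ 2 * sumsq.
have hF : \sum_i lam i = F.
  rewrite (trace_char n0 hcharl) /B /M traceB // -/a /F /sumsq; ring.
have beta1 : 1 - alpha <= beta by rewrite /beta le_max lexx.
have betad : alpha * (maxoutdeg D)%:R <= beta by rewrite /beta le_max lexx orbT.
have apos : 0 < a by nra.
set k := a / nR.
have kpos : 0 < k by rewrite /k divr_gt0 //; lra.
have ak : a = nR * k by rewrite /k mulrC divfK //; lra.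
have dmaxE : forall i, ((outdeg D i)%:R : R) <= (maxoutdeg D)%:R.
  by move=> i; rewrite ler_nat /maxoutdeg; apply: (@leq_bigmax _ (fun i => outdeg D i) i).
have sumsq_le : sumsq <= (maxoutdeg D)%:R * a.
  rewrite /a narcs_out mulr_sumr /sumsq; apply: ler_sum => i _.
  rewrite expr2; apply: ler_wpM2r => //.
have hFk : F <= nR * k ^+ 2.
  have h1 : (1 - alpha) ^+ 2 * a <= (1 - alpha) * beta * a.
    rewrite expr2 -mulrA -mulrA; apply: ler_wpM2l; first lra.
    by apply: ler_wpM2r; lra.
  have h2 : alpha ^+ 2 * sumsq <= alpha * beta * a.
    apply: (@le_trans _ _ (alpha ^+ 2 * ((maxoutdeg D)%:R * a))).
      by apply: ler_wpM2l => //; apply: exprn_ge0.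
    rewrite expr2 -!mulrA; apply: ler_wpM2l => //; rewrite !mulrA.
    by apply: ler_wpM2r; lra.
  have h3 : beta * a <= nR * k ^+ 2.
    rewrite ak; nra.
  rewrite /F; nra.
pose c j := alpha * (outdeg D j)%:R + (1 - alpha) * ((indeg D j)%:R : R).
have sumc : \sum_j c j = a.
  rewrite /c big_split /= -!mulr_sumr -narcs_out -narcs_in -/a; ring.
have ray := RayM.rayleigh Bsym hcharl lammax.
have hc2 : \sum_j c j ^+ 2 <= lam i0 * nR.
  by have := ray (u1 R n); rewrite /B /M u1B u1u1.
have cs1 : a ^+ 2 <= nR * \sum_j c j ^+ 2.
  have := cauchy_sum (xpredT : pred 'I_n) c; rewrite card_ord sumc.
  done.
have k2 : k ^+ 2 <= lam i0.
  have : nR * (nR * k ^+ 2) <= nR * (nR * lam i0).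
    have -> : nR * (nR * k ^+ 2) = a ^+ 2 by rewrite ak; ring.
    apply: (le_trans cs1); apply: ler_wpM2l; lra.
  move=> h; have nn : 0 < nR * nR by nra.
  rewrite -(ler_pM2l nn) -!mulrA //.
have ks0 : k <= sigma i0 by apply: sq_le => //; lra.
set S := \sum_(i | i != i0) sigma i.
have sumsig : \sum_i sigma i = sigma i0 + S by rewrite (bigD1 i0).
have sumlam : F = lam i0 + \sum_(i | i != i0) lam i by rewrite -hF (bigD1 i0).
have cardm : (#|predC1 i0|%:R : R) = nR - 1.
  by rewrite cardC1 card_ord -subn1 natrB.
have cs2 : S ^+ 2 <= (nR - 1) * (F - sigma i0 ^+ 2).
  have : S ^+ 2 <= #|predC1 i0|%:R * \sum_(i | i != i0) sigma i ^+ 2 := cauchy_sum (predC1 i0) sigma.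
  rewrite cardm sumlam /lam; move=> h.
  by have -> : sigma i0 ^+ 2 + \sum_(i | i != i0) sigma i ^+ 2 - sigma i0 ^+ 2 = \sum_(i | i != i0) sigma i ^+ 2 by ring.
have S0 : 0 <= S by apply: sumr_ge0.
have sF : sigma i0 ^+ 2 <= F.
  rewrite sumlam /lam lerDl; apply: sumr_ge0 => i _; apply: sqr_ge0.
have hbound : bound = k + Num.sqrt ((nR - 1) * (F - k ^+ 2)) by rewrite /bound /k expr_div_n.
have [mi1 mi2] := main_ineq (m := nR - 1) (x := sigma i0) (k := k) (F := F) (S := S)
  ltac:(lra) ltac:(lra) ks0 sF ltac:(rewrite subrK //) S0 cs2.
split; first by rewrite sumsig hbound.
have nm1 : 0 < nR - 1 by lra.
have sub_diag : forall (X : 'M[R]_n) (x : R) i, (x%:M - X) i i = x - X i i.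
  by move=> X x i; rewrite !mxE eqxx mulr1n.
have sE : s = Num.sqrt ((F - k ^+ 2) / (nR - 1)).
  by rewrite /s /F /k expr_div_n [alpha ^+ 2 * sumsq + _]addrC.
set Cm := (lam i0)%:M - B.
have Csym : Cm^T = Cm by rewrite /Cm linearB /= tr_scalar_mx Bsym.
have Cpsd : forall v : 'rV_n, 0 <= (v *m Cm *m v^T) 0 0.
  move=> v; rewrite /Cm qf_shift subr_ge0; apply: ray.
split.
  move=> heq.
  have [ek eS] := mi2 ltac:(by rewrite -sumsig -hbound).
  have lam0 : lam i0 = k ^+ 2 by rewrite /lam ek.
  have hmu : forall i, i != i0 -> sigma i = S / (nR - 1).
    have ceq : S ^+ 2 = #|predC1 i0|%:R * \sum_(i | predC1 i0 i) sigma i ^+ 2.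
      rewrite cardm eS; congr (_ * _); rewrite sumlam /lam; ring.
    by move=> i ne; have := cauchy_sum_eq ceq ne; rewrite cardm.
  set mu := S / (nR - 1).
  have mu0 : 0 <= mu by apply: divr_ge0; lra.
  have mus : mu = s.
    rewrite sE; have -> : (F - k ^+ 2) / (nR - 1) = mu ^+ 2.
      rewrite /mu (expr_div_n S (nR - 1) 2) eS ek; field; lra.
    by rewrite sqrtr_sqr ger0_norm.
  have cE : forall j, c j = k.
    have ceq : (\sum_j c j) ^+ 2 = #|(xpredT : pred 'I_n)|%:R * \sum_j c j ^+ 2.
      rewrite card_ord sumc; apply/eqP; rewrite eq_le cs1 /=.
      rewrite lam0 in hc2; rewrite ak; nra.
    by move=> j; have := cauchy_sum_eq ceq (erefl true : xpredT j); rewrite card_ord sumc.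
  have u1C : ((u1 R n) *m Cm *m (u1 R n)^T) 0 0 = 0.
    rewrite /Cm qf_shift /B /M u1B u1u1.
    under eq_bigr => j _ do rewrite (cE j : alpha * _ + _ = k).
    by rewrite sumr_const card_ord lam0 -mulr_natl /nR; ring.
  have u1B0 := psd_null Csym Cpsd u1C.
  have dE : forall i, (outdeg D i)%:R = k.
    move=> i; have := congr1 (fun X : 'rV[R]_n => X 0 i) u1B0.
    have EB (X Y : 'rV[R]_n) j : (X - Y) 0 j = X 0 j - Y 0 j by rewrite !mxE.
    have EZ (x : R) (X : 'rV[R]_n) j : (x *: X) 0 j = x * X 0 j by rewrite mxE.
    rewrite /Cm mulmxBr /= EB.
    rewrite (u1B_row cE) mul_mx_scalar EZ [u1 _ _ _ _]mxE mulr1 lam0.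
    move=> h; have : k ^+ 2 - k * (outdeg D i)%:R = 0 by rewrite h mxE.
    move/eqP; rewrite subr_eq0 expr2 => /eqP e.
    by apply: (mulfI (lt0r_neq0 kpos)); rewrite -e.
  have eE : forall j, (indeg D j)%:R = k.
    move=> j; have := cE j; rewrite /c dE => e.
    have : (1 - alpha) * ((indeg D j)%:R - k) = 0 by rewrite mulrBr; lra.
    by move/eqP; rewrite mulf_eq0 => /orP [/eqP h|/eqP h]; lra.
  have [sk|sk] := eqVneq s k.
    left.
    have lamall : forall i, lam i = k ^+ 2.
      move=> i; have [->|ne] := eqVneq i i0; first exact: lam0.
      by rewrite /lam hmu // -/mu mus sk.
    have Cdiag : forall i, 0 <= Cm i i by move=> i; rewrite -qf_delta; apply: Cpsd.
    have trC : \sum_i Cm i i = 0.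
      have -> : \sum_i Cm i i = \tr Cm by [].
      rewrite /Cm linearB /= mxtrace_scalar -(trace_char n0 hcharl).
      under eq_bigr => i _ do rewrite lamall.
      by rewrite sumr_const card_ord lam0 subrr.
    have Ci0 := psumr_eq0P (fun i _ => Cdiag i) trC (i:=i0) isT.
    rewrite /Cm sub_diag lam0 /B /M diagB // dE in Ci0.
    have k1 : 1 <= k.
      rewrite -(dE i0) ler1n -(ltr0n R) dE //.
    have e0 : k * (1 - alpha) * (k * (1 + alpha) - (1 - alpha)) = 0.
      have -> : k * (1 - alpha) * (k * (1 + alpha) - (1 - alpha)) = k ^+ 2 - (alpha ^+ 2 * k ^+ 2 + (1 - alpha) ^+ 2 * k) by ring.
      by rewrite Ci0.
    move/eqP: e0; rewrite mulf_eq0 => /orP [|/eqP e1].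
      by rewrite mulf_eq0 => /orP [/eqP h|/eqP h]; exfalso; lra.
    have a0 : alpha = 0 by nra.
    have kk1 : k = 1 by rewrite a0 in e1; lra.
    split => //.
    have od1 : forall i, outdeg D i = 1%N by move=> i; apply/eqP; rewrite -(pnatr_eq1 R) dE kk1.
    have id1 : forall i, indeg D i = 1%N by move=> i; apply/eqP; rewrite -(pnatr_eq1 R) eE kk1.
    have [f [finj fE]] := deg1_fun od1 id1.
    have fnfix : forall x, f x != x by move=> x; have := hloop x; rewrite fE.
    have [cs [h1 h2 h3]] := cycles_of_perm finj fnfix.
    by exists cs; split => // i j; rewrite fE h3.
  right; split; first by move=> i; rewrite dE eE.
  split; first by [].
  split.
    by move=> i vi; have -> : i = i0 by apply: val_inj.
  move=> i vi; rewrite -mus; apply: hmu; apply/eqP => e; apply: vi; by rewrite e.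
case=> [[a0 hdsc]|[hreg [snk [hi0 hio]]]]; last first.
  rewrite sumsig hbound.
  have -> : sigma i0 = k by apply: hi0.
  have hS : S = \sum_(i | i != i0) s.
    apply: eq_bigr => i ne; apply: hio => e; move: ne; suff -> : i = i0 by rewrite eqxx.
    by apply: val_inj; rewrite e.
  have hS2 : \sum_(i | i != i0) s = nR * s - s.
    have : \sum_(i < n) s = s + \sum_(i < n | i != i0) s := bigD1 i0 isT.
    rewrite sumr_const card_ord => e.
    by rewrite /nR mulr_natl e; ring.
  rewrite hS hS2; congr (_ + _).
  have -> : (nR - 1) * (F - k ^+ 2) = (nR - 1) ^+ 2 * ((F - k ^+ 2) / (nR - 1)).
    by field; lra.
  by rewrite sqrtrM ?sqr_ge0 // sqrtr_sqr ger0_norm -?sE; [ring | lra].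
have [f [finj fE]] := dsc_fun hdsc.
have od1 : forall i, outdeg D i = 1%N.
  move=> i; rewrite /outdeg; have -> : [set j | D i j] = [set f i].
    by apply/setP => j; rewrite !inE fE eq_sym.
  by rewrite cards1.
have id1 : forall j, indeg D j = 1%N.
  move=> j; rewrite /indeg; have -> : [set i | D i j] = [set invF finj j].
    apply/setP => i; rewrite !inE fE; apply/eqP/eqP => [<-|->].
      by rewrite invF_f.
    by rewrite f_invF.
  by rewrite cards1.
have aE : a = nR.
  rewrite /a narcs_out; under eq_bigr => i _ do rewrite od1.
  by rewrite sumr_const card_ord.
have sumsqE : sumsq = nR.
  rewrite /sumsq; under eq_bigr => i _ do rewrite od1 expr1n.
  by rewrite sumr_const card_ord.
have B1 : B = 1%:M.
  apply/matrixP => i j; rewrite /B /M [RHS]mxE mxE.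
  have e : forall l, Aalpha alpha D i l * (Aalpha alpha D)^T l j = (f i == l)%:R * (f j == l)%:R.
    by move=> l; rewrite [_^T l j]mxE !Mentry a0 !fE !mul0r !add0r subr0 !mul1r.
  under eq_bigr => l _ do rewrite e.
  rewrite (bigD1 (f i)) //= eqxx mul1r big1 ?addr0.
    by rewrite (inj_eq finj) eq_sym.
  by move=> l /negbTE; rewrite eq_sym => ->; rewrite mul0r.
have sig1 : forall i, sigma i = 1.
  have hc1 : char_poly B = \prod_(i < n) ('X - ((fun _ : 'I_n => (1:R)) i)%:P).
    by rewrite B1 char_poly1.
  move=> i; have [j ej] := root_char hc1 (root_char_lam i hcharl).
  have s0 := hsig0 i; move: ej; rewrite /lam /= => ej; nra.
rewrite (eq_bigr (fun _ => 1)); last by move=> i _; apply: sig1.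
rewrite sumr_const card_ord -/nR /bound aE sumsqE a0.
have -> : (nR - 1) * ((1 - 0) ^+ 2 * nR + 0 ^+ 2 * nR - nR ^+ 2 / nR ^+ 2) = (nR - 1) ^+ 2.
  by field; lra.
rewrite sqrtr_sqr ger0_norm ?divff //; lra.
Qed.
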